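(* Let $d\ge2$, $n=2$, and $\mathcal T=\sum_{k=1}^3\mathbf v_k^{\otimes d}$. (i) If $d\in\{2,4\}$, every $\mathbf v\in\mathbb R^2$ with $\|\mathbf v\|=1$ is an eigenvector of $\mathcal T$, with eigenvalue $\mu=\frac32$ if $d=2$ and $\mu=\frac98$ if $d=4$. (ii) If $d\ge6$ is even, the normalized eigenpairs of $\mathcal T$ are exactly the $12$ pairs $(\pm\mathbf v_k,\,1+2^{1-d})$, $1\le k\le3$, and $\big((\mathbf v_k+2\mathbf v_j)/\sqrt3,\,3^{d/2}2^{1-d}\big)$, $1\le k\ne j\le3$. (iii) If $d\ge3$ is odd, the normalized eigenpairs of $\mathcal T$ are exactly the $6$ pairs $(\mathbf v_k,\,1-2^{1-d})$ and $(-\mathbf v_k,\,-(1-2^{1-d}))$, $1\le k\le3$.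
   Context: For $n=2$ the simplex frame is $\mathbf v_1=(1,0)^\top$, $\mathbf v_2=(-\frac12,\frac{\sqrt3}2)^\top$, $\mathbf v_3=(-\frac12,-\frac{\sqrt3}2)^\top$ (unit vectors with pairwise inner product $-\frac12$ and sum $\mathbf 0$; up to an orthogonal transformation this is the general definition $\mathbf v_k=\sqrt{1+\frac1n}\mathbf e_k-n^{-3/2}(\sqrt{n+1}-1)\mathbf 1_n$, $\mathbf v_{n+1}=-n^{-1/2}\mathbf 1_n$). $\mathcal T\cdot\mathbf v^{d-1}=\sum_{k=1}^3\langle\mathbf v,\mathbf v_k\rangle^{d-1}\mathbf v_k$. A normalized eigenpair is $(\mathbf v,\mu)$ with $\|\mathbf v\|=1$ and $\mathcal T\cdot\mathbf v^{d-1}=\mu\mathbf v$. *)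

(* Defs.v *)
From Stdlib Require Import Reals Lra Lia.
Open Scope R_scope.

Definition vec2 := (R * R)%type.

Definition vadd (u w : vec2) : vec2 := (fst u + fst w, snd u + snd w).
Definition vscale (a : R) (u : vec2) : vec2 := (a * fst u, a * snd u).
Definition inner (u w : vec2) : R := fst u * fst w + snd u * snd w.
Definition vnorm (u : vec2) : R := sqrt (inner u u).

Inductive idx : Type := I1 | I2 | I3.

Definition frame (k : idx) : vec2 :=
  match k with
  | I1 => (1, 0)
  | I2 => (- (1/2), sqrt 3 / 2)
  | I3 => (- (1/2), - (sqrt 3 / 2))
  end.

(* T . v^(d-1) = sum_{k=1}^3 <v, v_k>^(d-1) v_k  for T = sum_k v_k^{(x) d}. *)
Definition Tapply (d : nat) (v : vec2) : vec2 :=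
  vadd (vscale (inner v (frame I1) ^ (d - 1)) (frame I1))
   (vadd (vscale (inner v (frame I2) ^ (d - 1)) (frame I2))
         (vscale (inner v (frame I3) ^ (d - 1)) (frame I3))).

Definition is_eigenpair (d : nat) (v : vec2) (mu : R) : Prop :=
  vnorm v = 1 /\ Tapply d v = vscale mu v.

(* Main.v *)
Require Import Defs.
From Stdlib Require Import Reals Lra Lia.
Open Scope R_scope.

Definition S3 (a b c : R) (n : nat) := a^n*(b-c) + b^n*(c-a) + c^n*(a-b).

Fixpoint H (p q : R) (n : nat) : R :=
  match n with
  | O => 1
  | S O => 0
  | S (S O) => p
  | S (S ((S k) as k1)) => p * H p q k1 + q * H p q k
  end.

Lemma H3 p q n : H p q (S (S (S n))) = p * H p q (S n) + q * H p q n.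
Proof. reflexivity. Qed.

Lemma pow_step (t p q : R) n : t^3 = p*t + q -> t^(n+5) = p*t^(n+3) + q*t^(n+2).
Proof.
  intro h. rewrite !pow_add.
  replace (t^5) with (t^2 * (p*t+q)) by (rewrite <- h; ring). ring.
Qed.

Lemma S_H a b c : a + b + c = 0 -> forall n,
  S3 a b c (n+2) = S3 a b c 2 * H (-(a*b+b*c+c*a)) (a*b*c) n.
Proof.
  intros h.
  set (p := -(a*b+b*c+c*a)). set (q := a*b*c).
  assert (hc : c = -a-b) by lra.
  assert (ca : a^3 = p*a + q) by (unfold p, q; rewrite hc; ring).
  assert (cb : b^3 = p*b + q) by (unfold p, q; rewrite hc; ring).
  assert (cc : c^3 = p*c + q) by (unfold p, q; rewrite hc; ring).
  assert (forall n, S3 a b c (n+2) = S3 a b c 2 * H p q n /\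
                    S3 a b c (n+3) = S3 a b c 2 * H p q (S n) /\
                    S3 a b c (n+4) = S3 a b c 2 * H p q (S (S n))).
  { induction n as [|n [IH1 [IH2 IH3]]].
    - simpl (0+2)%nat; simpl (0+3)%nat; simpl (0+4)%nat.
      unfold S3, p, q; simpl H; rewrite hc; repeat split; ring.
    - replace (S n + 2)%nat with (n+3)%nat by lia.
      replace (S n + 3)%nat with (n+4)%nat by lia.
      replace (S n + 4)%nat with (n+5)%nat by lia.
      repeat split; try assumption.
      rewrite H3.
      assert (E: S3 a b c (n+5) = p * S3 a b c (n+3) + q * S3 a b c (n+2)).
      { unfold S3. rewrite (pow_step a p q n ca), (pow_step b p q n cb), (pow_step c p q n cc). ring. }
      rewrite E, IH1, IH2. ring. }
  intro n; apply H0.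
Qed.

Lemma H_pos p q : 0 < p -> forall n,
  0 < H p q (2*n) /\ 0 <= q * H p q (2*n+1) /\ 0 < H p q (2*n+2).
Proof.
  intros hp n. induction n as [|n [IH1 [IH2 IH3]]].
  - simpl. lra.
  - replace (2 * S n)%nat with (2*n+2)%nat by lia.
    replace (2*n+2+1)%nat with (S (S (S (2*n)))) by lia.
    replace (2*n+2+2)%nat with (S (S (S (2*n+1)))) by lia.
    rewrite !H3.
    replace (S (2*n)) with (2*n+1)%nat by lia.
    replace (S (2*n+1)) with (2*n+2)%nat by lia.
    repeat split; try assumption.
    + replace (q * (p * H p q (2 * n + 1) + q * H p q (2 * n)))
        with (p * (q * H p q (2 * n + 1)) + (q*q) * H p q (2 * n)) by ring.
      assert (0 <= q*q) by nra. nra.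
    + nra.
Qed.

Lemma H_odd_zero p q : 0 < p -> forall w, H p q (2*w+3) = 0 -> q = 0.
Proof.
  intros hp w h.
  destruct (H_pos p q hp w) as [h1 [h2 _]].
  replace (2*w+3)%nat with (S (S (S (2*w)))) in h by lia.
  rewrite H3 in h. replace (S (2*w)) with (2*w+1)%nat in h by lia.
  assert (E: q*q * H p q (2*w) = 0).
  { replace (q*q*H p q (2*w)) with (q*(p * H p q (2 * w + 1) + q * H p q (2 * w)) - p*(q*H p q (2*w+1))) by ring.
    rewrite h. assert (q*H p q (2*w+1) = 0 \/ q*H p q (2*w+1) > 0) by lra.
    destruct H0. rewrite H0; ring.
    exfalso. assert (q * (p * H p q (2 * w + 1) + q * H p q (2 * w)) = 0) by (rewrite h; ring). nra. }
  apply Rmult_integral in E. destruct E as [E|E]; [|lra].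
  apply Rmult_integral in E; tauto.
Qed.

Lemma s2 : sqrt 3 * sqrt 3 = 3.
Proof. apply sqrt_sqrt; lra. Qed.
Lemma spos : 0 < sqrt 3.
Proof. apply sqrt_lt_R0; lra. Qed.

Lemma cross d x y mu : Tapply d (x,y) = vscale mu (x,y) ->
  S3 (inner (x,y) (frame I1)) (inner (x,y) (frame I2)) (inner (x,y) (frame I3)) (d-1) = 0.
Proof.
  unfold Tapply, vscale, vadd, S3.
  set (a := inner (x,y) (frame I1)). set (b := inner (x,y) (frame I2)). set (c := inner (x,y) (frame I3)).
  set (P := a^(d-1)). set (Q := b^(d-1)). set (R0 := c^(d-1)).
  intro h. injection h as h1 h2. simpl in h1, h2.
  assert (ea : a = x) by (unfold a, inner; simpl; field).
  assert (eb : b = -(1/2)*x + sqrt 3/2*y) by (unfold b, inner; simpl; field).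
  assert (ec : c = -(1/2)*x - sqrt 3/2*y) by (unfold c, inner; simpl; field).
  clearbody P Q R0. rewrite ea, eb, ec.
  pose proof s2 as hs2.
  transitivity (sqrt 3 * ((P * 1 + (Q * - (1 / 2) + R0 * - (1 / 2)))*y - (P * 0 + (Q * (sqrt 3 / 2) + R0 * - (sqrt 3 / 2)))*x) + (sqrt 3 * sqrt 3 - 3)/2*(Q-R0)*x).
  - field.
  - rewrite h1, h2, hs2. field.
Qed.

Lemma norm1 v : vnorm v = 1 -> inner v v = 1.
Proof.
  unfold vnorm. intro h. destruct (Rlt_or_le (inner v v) 0) as [hl|hl].
  - rewrite sqrt_neg_0 in h; lra.
  - rewrite <- (sqrt_sqrt (inner v v) hl), h. field.
Qed.

Lemma norm1' v : inner v v = 1 -> vnorm v = 1.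
Proof. unfold vnorm. intro h. rewrite h. apply sqrt_1. Qed.

Lemma mu_unique d v mu mu0 : inner v v = 1 -> Tapply d v = vscale mu v -> Tapply d v = vscale mu0 v -> mu = mu0.
Proof.
  intros hn h1 h2. rewrite h1 in h2. destruct v as [x y]. unfold vscale in h2. simpl in h2.
  injection h2 as e1 e2. unfold inner in hn; simpl in hn.
  assert (HH : (mu - mu0) * (x*x+y*y) = 0).
  { replace ((mu - mu0) * (x*x+y*y)) with ((mu*x - mu0*x)*x + (mu*y-mu0*y)*y) by field.
    rewrite e1, e2. field. }
  rewrite hn in HH. lra.
Qed.

Lemma innerf k j : inner (frame k) (frame j) = if (match k, j with I1,I1 | I2,I2 | I3,I3 => true | _,_ => false end) then 1 else -(1/2).
Proof.
  pose proof s2. destruct k, j; unfold inner; simpl; nra.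
Qed.

Lemma Tframe d k : Tapply d (frame k) = vscale (1 - (-(1/2))^(d-1)) (frame k).
Proof.
  unfold Tapply. rewrite !innerf. destruct k; simpl; rewrite pow1;
  unfold vscale, vadd; simpl; f_equal; field.
Qed.

Lemma Tneg d v : Tapply d (vscale (-1) v) = vscale ((-1)^(d-1)) (Tapply d v).
Proof.
  destruct v as [x y]. unfold Tapply, vscale, vadd, inner. simpl.
  replace ((-1 * x * 1 + -1 * y * 0)) with (-1 * (x*1+y*0)) by field.
  replace (-1 * x * - (1 / 2) + -1 * y * (sqrt 3 / 2)) with (-1 * (x * - (1 / 2) + y * (sqrt 3 / 2))) by field.
  replace (-1 * x * - (1 / 2) + -1 * y * - (sqrt 3 / 2)) with (-1 * (x * - (1 / 2) + y * - (sqrt 3 / 2))) by field.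
  rewrite !Rpow_mult_distr. f_equal; field.
Qed.

Lemma podd x k : (-x)^(S (2*k)) = -(x^(S (2*k))).
Proof. replace (-x) with (-1*x) by field. rewrite Rpow_mult_distr, pow_1_odd. field. Qed.
Lemma peven x k : (-x)^(2*k) = x^(2*k).
Proof. replace (-x) with (-1*x) by field. rewrite Rpow_mult_distr, pow_1_even. field. Qed.

Lemma half_pow n : (1/2)^n = 2^1/2^(S n).
Proof.
  assert (h: (1/2)^n * 2^n = 1) by (rewrite <- Rpow_mult_distr; replace (1/2*2) with 1 by field; apply pow1).
  assert (0 < 2^n) by (apply pow_lt; lra).
  simpl. field_simplify; [|lra]. apply (Rmult_eq_reg_r (2^n)); [|lra]. field_simplify; lra.
Qed.

Lemma keyK k : sqrt 3 * (sqrt 3/2)^(S (2*k)) = 3^(k+1) * (2^1/2^(S (S (2*k)))).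
Proof.
  rewrite <- (half_pow (S (2*k))).
  replace (sqrt 3/2) with (sqrt 3 * (1/2)) by field.
  rewrite Rpow_mult_distr.
  replace (sqrt 3 ^ S (2*k)) with (sqrt 3 * sqrt 3 ^ (2*k)) by reflexivity.
  rewrite pow_mult, pow_add.
  replace (sqrt 3 ^ 2) with 3 by (simpl; rewrite Rmult_1_r, s2; reflexivity).
  transitivity ((sqrt 3 * sqrt 3) * 3^k * (1/2)^(S (2*k))); [ring|].
  rewrite s2. simpl. ring.
Qed.

Lemma Tabc d v al be ga : inner v (frame I1) = al -> inner v (frame I2) = be -> inner v (frame I3) = ga ->
  Tapply d v = (al^(d-1)*1 + (be^(d-1)*(-(1/2)) + ga^(d-1)*(-(1/2))),
                al^(d-1)*0 + (be^(d-1)*(sqrt 3/2) + ga^(d-1)*(-(sqrt 3/2)))).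
Proof. intros h1 h2 h3. unfold Tapply. rewrite h1, h2, h3. reflexivity. Qed.

Definition cand k j := vscale (/ sqrt 3) (vadd (frame k) (vscale 2 (frame j))).

Lemma inv_s : / sqrt 3 = sqrt 3 / 3.
Proof. pose proof s2; pose proof spos. field_simplify; [|lra]. apply (Rmult_eq_reg_l (sqrt 3)); [|lra]. field_simplify; lra. Qed.

Ltac rsolve := pose proof s2; pose proof spos; nra.

Ltac candt := unfold cand, vscale, vadd, frame; rewrite inv_s; simpl; f_equal; rsolve.
Lemma cand_12 : cand I1 I2 = (0, 1). Proof. candt. Qed.
Lemma cand_13 : cand I1 I3 = (0, -1). Proof. candt. Qed.
Lemma cand_21 : cand I2 I1 = (sqrt 3/2, 1/2). Proof. candt. Qed.
Lemma cand_23 : cand I2 I3 = (-(sqrt 3/2), -(1/2)). Proof. candt. Qed.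
Lemma cand_31 : cand I3 I1 = (sqrt 3/2, -(1/2)). Proof. candt. Qed.
Lemma cand_32 : cand I3 I2 = (-(sqrt 3/2), 1/2). Proof. candt. Qed.

Ltac innt := unfold inner, frame; simpl; field.

Lemma ss1 K : sqrt 3 * K * (sqrt 3 / 2) = 3*K/2.
Proof. transitivity ((sqrt 3 * sqrt 3)*K/2); [field|rewrite s2; reflexivity]. Qed.
Lemma ss2 K : sqrt 3 * K * - (sqrt 3 / 2) = -(3*K/2).
Proof. transitivity (-((sqrt 3 * sqrt 3)*K/2)); [field|rewrite s2; reflexivity]. Qed.

Lemma rev_kj n k j : k <> j ->
  Tapply (S (S (2*n))) (cand k j) = vscale (3^(n+1)*(2^1/2^(S (S (2*n))))) (cand k j).
Proof.
  intro hkj. rewrite <- keyK.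
  pose proof (podd (sqrt 3/2) n) as hp.
  assert (h0 : 0^(S (2*n)) = 0) by (simpl; ring).
  destruct k, j; try congruence;
  [rewrite cand_12; rewrite (Tabc _ _ 0 (sqrt 3/2) (-(sqrt 3/2))) by innt
  | rewrite cand_13; rewrite (Tabc _ _ 0 (-(sqrt 3/2)) (sqrt 3/2)) by innt
  | rewrite cand_21; rewrite (Tabc _ _ (sqrt 3/2) 0 (-(sqrt 3/2))) by innt
  | rewrite cand_23; rewrite (Tabc _ _ (-(sqrt 3/2)) 0 (sqrt 3/2)) by innt
  | rewrite cand_31; rewrite (Tabc _ _ (sqrt 3/2) (-(sqrt 3/2)) 0) by innt
  | rewrite cand_32; rewrite (Tabc _ _ (-(sqrt 3/2)) (sqrt 3/2) 0) by innt];
  replace (S (S (2*n)) - 1)%nat with (S (2*n)) by lia;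
  rewrite ?hp, ?h0; set (K := (sqrt 3 / 2) ^ S (2 * n)); unfold vscale; simpl; f_equal; rewrite ?ss1, ?ss2; field.
Qed.

Lemma sq_case x r : x*x = r*r -> x = r \/ x = -r.
Proof. intro h. assert (HH : (x-r)*(x+r) = 0) by (ring_simplify; lra).
  apply Rmult_integral in HH. lra. Qed.

Lemma classD x y : x*x + y*y = 1 ->
  S3 (inner (x,y) (frame I1)) (inner (x,y) (frame I2)) (inner (x,y) (frame I3)) 2 = 0 ->
  exists k, (x,y) = frame k \/ (x,y) = vscale (-1) (frame k).
Proof.
  intros hn h.
  set (a := inner (x,y) (frame I1)) in *. set (b := inner (x,y) (frame I2)) in *. set (c := inner (x,y) (frame I3)) in *.
  assert (ea : a = x) by (unfold a, inner; simpl; field).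
  assert (eb : b = -(1/2)*x + sqrt 3/2*y) by (unfold b, inner; simpl; field).
  assert (ec : c = -(1/2)*x - sqrt 3/2*y) by (unfold c, inner; simpl; field).
  assert (E : (a-b)*(b-c)*(c-a) = 0) by (unfold S3 in h; ring_simplify; ring_simplify in h; lra).
  clearbody a b c. subst a b c.
  pose proof s2 as hs; pose proof spos as hsp.
  apply Rmult_integral in E; destruct E as [E|E]; [apply Rmult_integral in E; destruct E as [E|E]|].
  - assert (hy : y = sqrt 3 * x) by nra.
    assert (hx : x*x = (1/2)*(1/2)) by (subst y; nra).
    exists I3. destruct (sq_case _ _ hx) as [e|e]; [right|left]; unfold vscale, frame; subst y x; simpl; f_equal; field.
  - assert (hy : y = 0) by nra.
    assert (hx : x*x = 1*1) by (subst y; nra).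
    exists I1. destruct (sq_case _ _ hx) as [e|e]; [left|right]; unfold vscale, frame; subst y x; simpl; f_equal; field.
  - assert (hy : y = - (sqrt 3 * x)) by nra.
    assert (hx : x*x = (1/2)*(1/2)) by (subst y; nra).
    exists I2. destruct (sq_case _ _ hx) as [e|e]; [right|left]; unfold vscale, frame; subst y x; simpl; f_equal; field.
Qed.

Lemma classQ x y : x*x + y*y = 1 ->
  (inner (x,y) (frame I1)) * (inner (x,y) (frame I2)) * (inner (x,y) (frame I3)) = 0 ->
  exists k j, k <> j /\ (x,y) = cand k j.
Proof.
  intros hn h.
  set (a := inner (x,y) (frame I1)) in *. set (b := inner (x,y) (frame I2)) in *. set (c := inner (x,y) (frame I3)) in *.
  assert (ea : a = x) by (unfold a, inner; simpl; field).
  assert (eb : b = -(1/2)*x + sqrt 3/2*y) by (unfold b, inner; simpl; field).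
  assert (ec : c = -(1/2)*x - sqrt 3/2*y) by (unfold c, inner; simpl; field).
  clearbody a b c. subst a b c.
  pose proof s2 as hs; pose proof spos as hsp.
  apply Rmult_integral in h; destruct h as [E|E]; [apply Rmult_integral in E; destruct E as [E|E]|].
  - assert (hy : y*y = 1*1) by (subst x; nra).
    destruct (sq_case _ _ hy) as [e|e]; [exists I1, I2; rewrite cand_12 | exists I1, I3; rewrite cand_13];
      (split; [discriminate|]); subst x y; f_equal; field.
  - assert (hx : x = sqrt 3 * y) by nra.
    assert (hy : y*y = (1/2)*(1/2)) by (subst x; nra).
    destruct (sq_case _ _ hy) as [e|e]; [exists I2, I1; rewrite cand_21 | exists I2, I3; rewrite cand_23];
      (split; [discriminate|]); subst x y; f_equal; field.
  - assert (hx : x = - (sqrt 3 * y)) by nra.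
    assert (hy : y*y = (1/2)*(1/2)) by (subst x; nra).
    destruct (sq_case _ _ hy) as [e|e]; [exists I3, I2; rewrite cand_32 | exists I3, I1; rewrite cand_31];
      (split; [discriminate|]); subst x y; f_equal; field.
Qed.

Lemma vs_comm a b v : vscale a (vscale b v) = vscale b (vscale a v).
Proof. destruct v; unfold vscale; simpl; f_equal; ring. Qed.

Lemma rev_frame_even n k :
  Tapply (S (S (2*n))) (frame k) = vscale (1 + 2^1/2^(S (S (2*n)))) (frame k).
Proof.
  rewrite Tframe. replace (S (S (2*n)) - 1)%nat with (S (2*n)) by lia.
  rewrite podd, half_pow. f_equal. ring.
Qed.

Lemma rev_nframe_even n k :
  Tapply (S (S (2*n))) (vscale (-1) (frame k)) = vscale (1 + 2^1/2^(S (S (2*n)))) (vscale (-1) (frame k)).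
Proof.
  rewrite Tneg, rev_frame_even. replace (S (S (2*n)) - 1)%nat with (S (2*n)) by lia.
  rewrite pow_1_odd. apply vs_comm.
Qed.

Lemma rev_frame_odd n k :
  Tapply (S (2*n)) (frame k) = vscale (1 - 2^1/2^(S (2*n))) (frame k).
Proof.
  rewrite Tframe. replace (S (2*n) - 1)%nat with (2*n)%nat by lia.
  rewrite peven, half_pow. reflexivity.
Qed.

Lemma rev_nframe_odd n k :
  Tapply (S (2*n)) (vscale (-1) (frame k)) = vscale (- (1 - 2^1/2^(S (2*n)))) (vscale (-1) (frame k)).
Proof.
  rewrite Tneg, rev_frame_odd. replace (S (2*n) - 1)%nat with (2*n)%nat by lia.
  rewrite pow_1_even. destruct (frame k); unfold vscale; simpl; f_equal; ring.
Qed.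

Lemma norm_frame k : vnorm (frame k) = 1.
Proof. apply norm1'. rewrite innerf. destruct k; reflexivity. Qed.
Lemma norm_nframe k : vnorm (vscale (-1) (frame k)) = 1.
Proof. apply norm1'. pose proof (innerf k k) as HH. destruct (frame k) as [x y]. unfold inner, vscale in *; simpl in *.
  destruct k; simpl in HH; nra. Qed.
Lemma norm_cand k j : k <> j -> vnorm (cand k j) = 1.
Proof. intro h. apply norm1'. pose proof s2. destruct k, j; try congruence;
  [rewrite cand_12 | rewrite cand_13 | rewrite cand_21 | rewrite cand_23 | rewrite cand_31 | rewrite cand_32];
  unfold inner; simpl; nra. Qed.

Lemma s3 : sqrt 3 ^ 3 = 3 * sqrt 3.
Proof. simpl. rewrite <- Rmult_assoc, s2. ring. Qed.
Lemma s4 : sqrt 3 ^ 4 = 9.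
Proof. simpl. replace (sqrt 3 * (sqrt 3 * (sqrt 3 * (sqrt 3 * 1)))) with ((sqrt 3 * sqrt 3)*(sqrt 3 * sqrt 3)) by ring. rewrite s2. ring. Qed.
Lemma s2' : sqrt 3 ^ 2 = 3.
Proof. simpl. rewrite Rmult_1_r. apply s2. Qed.

Lemma T2 v : vnorm v = 1 -> is_eigenpair 2 v (3/2).
Proof.
  intro h. split; [exact h|]. apply norm1 in h. destruct v as [x y].
  unfold Tapply, vscale, vadd, inner, frame; simpl. f_equal; unfold Rdiv; ring_simplify; rewrite ?s2', ?s3, ?s4; field.
Qed.

Lemma T4 v : vnorm v = 1 -> is_eigenpair 4 v (9/8).
Proof.
  intro h. split; [exact h|]. apply norm1 in h. destruct v as [x y].
  unfold inner in h; simpl in h.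
  unfold Tapply, vscale, vadd, inner, frame; simpl.
  f_equal; [transitivity (9/8*x*(x*x+y*y)) | transitivity (9/8*y*(x*x+y*y))];
  try (rewrite h; ring); unfold Rdiv; ring_simplify; rewrite ?s2', ?s3, ?s4; field.
Qed.

Lemma fwd_setup d x y mu : is_eigenpair d (x,y) mu ->
  let a := inner (x,y) (frame I1) in let b := inner (x,y) (frame I2) in let c := inner (x,y) (frame I3) in
  x*x+y*y = 1 /\ S3 a b c (d-1) = 0 /\ a+b+c = 0 /\ 0 < -(a*b+b*c+c*a).
Proof.
  intros [hn he] a b c.
  apply norm1 in hn. unfold inner in hn; simpl in hn.
  split; [exact hn|]. split; [apply (cross d x y mu he)|].
  assert (ea : a = x) by (unfold a, inner; simpl; field).
  assert (eb : b = -(1/2)*x + sqrt 3/2*y) by (unfold b, inner; simpl; field).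
  assert (ec : c = -(1/2)*x - sqrt 3/2*y) by (unfold c, inner; simpl; field).
  clearbody a b c. subst a b c. pose proof s2 as HS.
  split; [field|].
  assert (HA : -(x * (- (1 / 2) * x + sqrt 3 / 2 * y) + (- (1 / 2) * x + sqrt 3 / 2 * y) * (- (1 / 2) * x - sqrt 3 / 2 * y) +
   (- (1 / 2) * x - sqrt 3 / 2 * y) * x) = 3/4 * (x*x) + (sqrt 3 * sqrt 3)/4 * (y*y)) by field.
  rewrite HA, HS. lra.
Qed.

Theorem mainTheorem8 :
  (* (i) d = 2 and d = 4 *)
  (forall v : vec2, vnorm v = 1 -> is_eigenpair 2 v (3/2)) /\
  (forall v : vec2, vnorm v = 1 -> is_eigenpair 4 v (9/8)) /\
  (* (ii) d >= 6 even *)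
  (forall d : nat, (6 <= d)%nat -> Nat.Even d ->
     forall (v : vec2) (mu : R),
       is_eigenpair d v mu <->
       ((exists k : idx, (v = frame k \/ v = vscale (-1) (frame k)) /\
                         mu = 1 + 2 ^ 1 / 2 ^ d) \/
        (exists k j : idx, k <> j /\
           v = vscale (/ sqrt 3) (vadd (frame k) (vscale 2 (frame j))) /\
           mu = 3 ^ (Nat.div d 2) * (2 ^ 1 / 2 ^ d)))) /\
  (* (iii) d >= 3 odd *)
  (forall d : nat, (3 <= d)%nat -> Nat.Odd d ->
     forall (v : vec2) (mu : R),
       is_eigenpair d v mu <->
       (exists k : idx,
          (v = frame k /\ mu = 1 - 2 ^ 1 / 2 ^ d) \/
          (v = vscale (-1) (frame k) /\ mu = - (1 - 2 ^ 1 / 2 ^ d)))).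
Proof.
  split; [exact T2|]. split; [exact T4|]. split.
  - intros d hd [u hu] v mu.
    assert (hn : exists n, d = S (S (2*n)) /\ (2 <= n)%nat) by (exists (u-1)%nat; lia).
    destruct hn as [n [-> hn2]]. clear hu hd.
    assert (hdiv : Nat.div (S (S (2*n))) 2 = (n+1)%nat).
    { replace (S (S (2*n))) with ((n+1)*2)%nat by lia. apply Nat.div_mul. lia. }
    rewrite hdiv.
    split.
    + intro he. destruct v as [x y].
      destruct (fwd_setup _ _ _ _ he) as [hn [hS [h0 hp]]].
      replace (S (S (2*n)) - 1)%nat with ((2*(n-2)+3)+2)%nat in hS by lia.
      rewrite S_H in hS by exact h0.
      apply Rmult_integral in hS. destruct hS as [hD|hH].
      * destruct (classD x y hn hD) as [k [e|e]]; left; exists k; split; [tauto| |tauto|].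
        -- apply (mu_unique (S (S (2*n))) (x,y)); [unfold inner; simpl; lra | apply he | rewrite e; apply rev_frame_even].
        -- apply (mu_unique (S (S (2*n))) (x,y)); [unfold inner; simpl; lra | apply he | rewrite e; apply rev_nframe_even].
      * apply H_odd_zero in hH; [|exact hp].
        destruct (classQ x y hn hH) as [k [j [hkj e]]]. right. exists k, j. split; [exact hkj|]. split; [exact e|].
        apply (mu_unique (S (S (2*n))) (x,y)); [unfold inner; simpl; lra | apply he | rewrite e; apply rev_kj; exact hkj].
    + intros [[k [[e|e] ->]] | [k [j [hkj [e ->]]]]]; subst v; split.
      * apply norm_frame.
      * apply rev_frame_even.
      * apply norm_nframe.
      * apply rev_nframe_even.
      * apply norm_cand; exact hkj.
      * apply rev_kj; exact hkj.
  - intros d hd [r hr] v mu.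
    assert (hn : exists n, d = S (2*n) /\ (1 <= n)%nat) by (exists r; lia).
    destruct hn as [n [-> hn2]]. clear hr hd.
    split.
    + intro he. destruct v as [x y].
      destruct (fwd_setup _ _ _ _ he) as [hn [hS [h0 hp]]].
      replace (S (2*n) - 1)%nat with ((2*(n-1))+2)%nat in hS by lia.
      rewrite S_H in hS by exact h0.
      destruct (H_pos _ (inner (x, y) (frame I1) * inner (x, y) (frame I2) * inner (x, y) (frame I3)) hp (n-1)) as [hH _].
      apply Rmult_integral in hS. destruct hS as [hD|hH0]; [|lra].
      destruct (classD x y hn hD) as [k [e|e]]; exists k; [left|right]; split; try exact e.
      -- apply (mu_unique (S (2*n)) (x,y)); [unfold inner; simpl; lra | apply he | rewrite e; apply rev_frame_odd].
      -- apply (mu_unique (S (2*n)) (x,y)); [unfold inner; simpl; lra | apply he | rewrite e; apply rev_nframe_odd].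
    + intros [k [[e ->]|[e ->]]]; subst v; split.
      * apply norm_frame.
      * apply rev_frame_odd.
      * apply norm_nframe.
      * apply rev_nframe_odd.
Qed.
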